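(* Assume the standing assumptions (A1)–(A4) below. Let $r>0$ be a constant such that $\|u\|^2+\|w\|^2\le r$ for every $u\in\mathcal U$ and every extreme point $w$ of $\mathcal W$. Then for every $x\in\mathcal X$ the optimal value of \[ \min_{\lambda\in\mathbb R,\ \Lambda\in\mathbb R^{(k+m)\times n_2},\ \rho\in\mathbb R}\ \lambda+r\rho\quad\text{s.t.}\quad \lambda g_1g_1^T-\tfrac12 G(x)+\tfrac12(E^T\Lambda^T+\Lambda E)+\rho I\in \mathrm{COP}(\widehat{\mathcal U}\times\mathbb R^m_+),\ \ \rho\ge 0 \] equals $\pi(x)$.
   Context: Data: $A\in\mathbb R^{m\times n_1}$, $B\in\mathbb R^{m\times n_2}$, $c\in\mathbb R^{n_1}$, $d\in\mathbb R^{n_2}$, $F\in\mathbb R^{m\times k}$, $\mathcal X\subseteq\mathbb R^{n_1}$ closed convex. $\widehat{\mathcal U}\subseteq\mathbb R_+\times\mathbb R^{k-1}$ is a closed, convex, full-dimensional cone and $\mathcal U:=\{u\in\widehat{\mathcal U}: u_1=1\}$, assumed nonempty and compact. $e_1\in\mathbb R^k$ is the first standard basis vector, $g_1:=(e_1;0)\in\mathbb R^{k+m}$. The two-stage problem (RLP) is: $v^*_{RLP}:=\inf\{c^Tx+\sup_{u\in\mathcal U}d^Ty(u)\}$ over $x\in\mathcal X$ and maps $y:\mathcal U\to\mathbb R^{n_2}$ with $Ax+By(u)\ge Fu$ for all $u\in\mathcal U$. Standing assumptions: (A1) $\mathcal X$ and $\widehat{\mathcal U}$ are computationally tractable; (A2)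 (RLP) is feasible; (A3) $v^*_{RLP}$ is finite; (A4) relatively complete recourse: for all $x\in\mathcal X$, $u\in\mathcal U$ there is $y\in\mathbb R^{n_2}$ with $By\ge Fu-Ax$. Define $\mathcal W:=\{w\in\mathbb R^m: w\ge0,\ B^Tw=d\}$, $\pi(x):=\max_{u\in\mathcal U}\min_{y\in\mathbb R^{n_2}}\{d^Ty: By\ge Fu-Ax\}$, $E:=\begin{pmatrix}-de_1^T & B^T\end{pmatrix}\in\mathbb R^{n_2\times(k+m)}$, and $G(x):=\begin{pmatrix}0&(F-Axe_1^T)^T\\ F-Axe_1^T&0\end{pmatrix}\in\mathcal S^{k+m}$. For a closed convex cone $\mathcal K\subseteq\mathbb R^n$, $\mathrm{COP}(\mathcal K):=\{M\in\mathcal S^n: z^TMz\ge0\ \forall z\in\mathcal K\}$ and $\mathrm{CPP}(\mathcal K):=\{\sum_i z^i(z^i)^T: z^i\in\mathcal K\}$ (finite sums). *)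

(* Defs.v *)
From Stdlib Require Import Reals.
From mathcomp Require Import all_boot.
Set Implicit Arguments.
Unset Strict Implicit.
Unset Printing Implicit Defensive.
Open Scope R_scope.

Definition vec (n : nat) := 'I_n -> R.
Definition mat (p q : nat) := 'I_p -> 'I_q -> R.

Definition Rsum (n : nat) (f : 'I_n -> R) : R := \big[Rplus/0]_(i < n) f i.

Definition dot (n : nat) (u v : vec n) : R := Rsum (fun i => u i * v i).
Definition sqnorm (n : nat) (u : vec n) : R := dot u u.
Definition mulmv (p q : nat) (M : mat p q) (v : vec q) : vec p :=
  fun i => Rsum (fun j => M i j * v j).
Definition trmv (p q : nat) (M : mat p q) (v : vec p) : vec q :=
  fun j => Rsum (fun i => M i j * v i).

Definition convexR (n : nat) (C : vec n -> Prop) : Prop :=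
  forall u v : vec n, C u -> C v -> forall t, 0 <= t <= 1 ->
    C (fun i => t * u i + (1 - t) * v i).

(* sequentially closed (= closed in R^n) *)
Definition closedR (n : nat) (C : vec n -> Prop) : Prop :=
  forall (xs : nat -> vec n) (x : vec n), (forall t, C (xs t)) ->
    (forall i, Un_cv (fun t => xs t i) (x i)) -> C x.

(* sequentially compact (= compact in R^n) *)
Definition compactR (n : nat) (C : vec n -> Prop) : Prop :=
  forall xs : nat -> vec n, (forall t, C (xs t)) ->
    exists (phi : nat -> nat) (x : vec n),
      (forall t, (phi t < phi t.+1)%nat) /\ C x /\
      (forall i, Un_cv (fun t => xs (phi t) i) (x i)).

Definition coneR (n : nat) (C : vec n -> Prop) : Prop :=
  (exists u, C u) /\ forall u, C u -> forall t, 0 <= t -> C (fun i => t * u i).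

Definition full_dimensional (n : nat) (C : vec n -> Prop) : Prop :=
  exists (u0 : vec n) (eps : R), 0 < eps /\
    forall u : vec n, sqnorm (fun i => u i - u0 i) < eps * eps -> C u.

Definition extreme_point (n : nat) (C : vec n -> Prop) (w : vec n) : Prop :=
  C w /\ forall w1 w2 : vec n, C w1 -> C w2 -> forall t, 0 < t < 1 ->
    (forall i, w i = t * w1 i + (1 - t) * w2 i) -> w1 = w2.

Definition glb_of (S : R -> Prop) (v : R) : Prop :=
  (forall s, S s -> v <= s) /\ (forall v', (forall s, S s -> v' <= s) -> v' <= v).
Definition lub_of (S : R -> Prop) (v : R) : Prop :=
  (forall s, S s -> s <= v) /\ (forall v', (forall s, S s -> s <= v') -> v <= v').

(* ---------- the problem data (k written as k.+1, e_1 = ord0) ---------- *)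
Definition e1 (k : nat) : vec k.+1 := fun a => if a == ord0 then 1 else 0.

Definition Uset (k : nat) (Uhat : vec k.+1 -> Prop) (u : vec k.+1) : Prop :=
  Uhat u /\ u ord0 = 1.

Definition Wset (m n2 : nat) (B : mat m n2) (d : vec n2) (w : vec m) : Prop :=
  (forall i, 0 <= w i) /\ forall j, trmv B w j = d j.

Definition RLP_feasible (n1 n2 m k : nat) (A : mat m n1) (B : mat m n2)
  (F : mat m k.+1) (X : vec n1 -> Prop) (Uhat : vec k.+1 -> Prop)
  (x : vec n1) (y : vec k.+1 -> vec n2) : Prop :=
  X x /\ forall u, Uset Uhat u ->
    forall i, mulmv A x i + mulmv B (y u) i >= mulmv F u i.

Definition inner_value (n1 n2 m k : nat) (A : mat m n1) (B : mat m n2)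
  (d : vec n2) (F : mat m k.+1) (x : vec n1) (u : vec k.+1) (q : R) : Prop :=
  glb_of (fun s => exists y : vec n2,
            (forall i, mulmv B y i >= mulmv F u i - mulmv A x i) /\ s = dot d y) q.

Definition pi_value (n1 n2 m k : nat) (A : mat m n1) (B : mat m n2)
  (d : vec n2) (F : mat m k.+1) (Uhat : vec k.+1 -> Prop) (x : vec n1) (p : R)
  : Prop :=
  lub_of (fun s => exists u, Uset Uhat u /\ inner_value A B d F x u s) p.

Definition prod_cone (k m : nat) (Uhat : vec k -> Prop) (z : vec (k + m)) : Prop :=
  Uhat (fun a => z (lshift m a)) /\ forall b, 0 <= z (rshift k b).

Definition COP (n : nat) (K : vec n -> Prop) (M : mat n n) : Prop :=
  forall z : vec n, K z -> 0 <= Rsum (fun i => Rsum (fun j => z i * M i j * z j)).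

Definition g1 (k m : nat) : vec (k.+1 + m) :=
  fun i => match split i with inl a => e1 a | inr _ => 0 end.

(* E = ( -d e1^T   B^T ) in R^{n2 x (k+m)} *)
Definition Emat (n2 m k : nat) (B : mat m n2) (d : vec n2) : mat n2 (k.+1 + m) :=
  fun j i => match split i with
             | inl a => - (d j * e1 a)
             | inr b => B b j
             end.

(* G(x) = [0, (F - A x e1^T)^T ; F - A x e1^T, 0] *)
Definition Gmat (n1 m k : nat) (A : mat m n1) (F : mat m k.+1) (x : vec n1)
  : mat (k.+1 + m) (k.+1 + m) :=
  let H := fun (b : 'I_m) (a : 'I_k.+1) => F b a - mulmv A x b * e1 a in
  fun i j => match split i, split j with
             | inl a, inr b => H b a
             | inr b, inl a => H b a
             | _, _ => 0
             end.

Definition idmat (n : nat) : mat n n := fun i j => if i == j then 1 else 0.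

Definition copos_matrix (n1 n2 m k : nat) (A : mat m n1) (B : mat m n2)
  (d : vec n2) (F : mat m k.+1) (x : vec n1)
  (lam : R) (Lam : mat (k.+1 + m) n2) (rho : R) : mat (k.+1 + m) (k.+1 + m) :=
  fun i j =>
    lam * (@g1 k m i * @g1 k m j)
    - / 2 * Gmat A F x i j
    + / 2 * (Rsum (fun l => @Emat n2 m k B d l i * Lam j l)
             + Rsum (fun l => Lam i l * @Emat n2 m k B d l j))
    + rho * idmat i j.

(* Main.v *)
Require Import Defs.
From Stdlib Require Import Reals.
From mathcomp Require Import all_boot.
From Stdlib Require Import Lra Psatz Classical ClassicalEpsilon FunctionalExtensionality.
From HB Require Import structures.
Open Scope R_scope.
Set Implicit Arguments. Unset Strict Implicit.

HB.instance Definition _ := Monoid.isComLaw.Build R 0 Rplus (fun x y z => esym (Rplus_assoc x y z)) Rplus_comm Rplus_0_l.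

Lemma Rsum_seq_ind (I : Type) (s : seq I) (f : I -> R) :
  \big[Rplus/0]_(i <- s) f i = foldr (fun i acc => f i + acc) 0 s.
Proof. by elim: s => [|i s IH]; rewrite ?big_nil ?big_cons ?IH. Qed.

Lemma Rsum_ext n (f g : 'I_n -> R) : (forall i, f i = g i) -> Rsum f = Rsum g.
Proof. move=> h; rewrite /Rsum; apply: eq_bigr => i _; exact: h. Qed.

Lemma Rsum_add n (f g : 'I_n -> R) : Rsum (fun i => f i + g i) = Rsum f + Rsum g.
Proof. by rewrite /Rsum big_split. Qed.

Lemma big_scal (I : Type) (s : seq I) a (f : I -> R) :
  \big[Rplus/0]_(i <- s) (a * f i) = a * \big[Rplus/0]_(i <- s) f i.
Proof.
elim: s => [|i s IH]; rewrite ?big_nil ?big_cons; first ring.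
rewrite IH; ring.
Qed.

Lemma big_le (I : Type) (s : seq I) (f g : I -> R) : (forall i, f i <= g i) ->
  \big[Rplus/0]_(i <- s) f i <= \big[Rplus/0]_(i <- s) g i.
Proof.
move=> h; elim: s => [|i s IH]; rewrite ?big_nil ?big_cons; first lra.
have := h i; lra.
Qed.

Lemma big_nonneg (I : Type) (s : seq I) (P : pred I) (f : I -> R) : (forall i, P i -> 0 <= f i) ->
  0 <= \big[Rplus/0]_(i <- s | P i) f i.
Proof.
move=> h; elim: s => [|i s IH]; rewrite ?big_nil ?big_cons; first lra.
case Pi: (P i) => //; have := h i Pi; lra.
Qed.

Lemma Rsum_scal n a (f : 'I_n -> R) : Rsum (fun i => a * f i) = a * Rsum f.
Proof. exact: big_scal. Qed.

Lemma Rsum_scalr n a (f : 'I_n -> R) : Rsum (fun i => f i * a) = Rsum f * a.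
Proof. rewrite Rmult_comm -Rsum_scal; apply: Rsum_ext => i; ring. Qed.

Lemma Rsum_0 n : Rsum (fun _ : 'I_n => 0) = 0.
Proof. by rewrite /Rsum big1. Qed.

Lemma Rsum_opp n (f : 'I_n -> R) : Rsum (fun i => - f i) = - Rsum f.
Proof. have := Rsum_scal (-1) f; rewrite (Rsum_ext (g := fun i => - f i)); [lra | move=> i; ring]. Qed.

Lemma Rsum_sub n (f g : 'I_n -> R) : Rsum (fun i => f i - g i) = Rsum f - Rsum g.
Proof. rewrite Rsum_add Rsum_opp; ring. Qed.

Lemma Rsum_le n (f g : 'I_n -> R) : (forall i, f i <= g i) -> Rsum f <= Rsum g.
Proof.
move=> h; exact: big_le.
Qed.

Lemma Rsum_nonneg n (f : 'I_n -> R) : (forall i, 0 <= f i) -> 0 <= Rsum f.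
Proof. move=> h; rewrite -(Rsum_0 n); exact: Rsum_le. Qed.

Lemma Rsum_swap n p (f : 'I_n -> 'I_p -> R) :
  Rsum (fun i => Rsum (fun j => f i j)) = Rsum (fun j => Rsum (fun i => f i j)).
Proof. by rewrite /Rsum exchange_big. Qed.

Lemma Rsum_delta n (f : 'I_n -> R) l :
  Rsum (fun i => f i * (if i == l then 1 else 0)) = f l.
Proof.
rewrite /Rsum (bigD1 l) //= eqxx big1 ?Rmult_1_r ?Rplus_0_r //.
by move=> i /negbTE ->; rewrite Rmult_0_r.
Qed.

Lemma Rsum_term n (f : 'I_n -> R) l : (forall i, 0 <= f i) -> f l <= Rsum f.
Proof.
move=> h; rewrite /Rsum (bigD1 l) //=.
rewrite -{1}(Rplus_0_r (f l)); apply: Rplus_le_compat_l.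
apply: big_nonneg => i _; exact: h.
Qed.

Lemma Rsum_split k m (f : 'I_(k + m) -> R) :
  Rsum f = Rsum (fun a => f (lshift m a)) + Rsum (fun b => f (rshift k b)).
Proof. by rewrite /Rsum big_split_ord. Qed.

Lemma split_l k m (a : 'I_k) : split (lshift m a) = inl a.
Proof. exact: (unsplitK (inl a)). Qed.
Lemma split_r k m (b : 'I_m) : split (rshift k b) = inr b.
Proof. exact: (unsplitK (inr b)). Qed.

Lemma Rsum_cv n (f : nat -> 'I_n -> R) (l : 'I_n -> R) :
  (forall i, Un_cv (fun t => f t i) (l i)) -> Un_cv (fun t => Rsum (f t)) (Rsum l).
Proof.
move=> h; rewrite /Rsum.
have : forall s : seq 'I_n, Un_cv (fun t => \big[Rplus/0]_(i <- s) f t i) (\big[Rplus/0]_(i <- s) l i).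
  elim => [|i s IH].
    rewrite big_nil.
    have -> : (fun t => \big[Rplus/0]_(i <- [::]) f t i) = fun _ => 0.
      by apply: functional_extensionality => t; rewrite big_nil.
    move=> e he; exists 0%nat => t _; rewrite /R_dist Rminus_0_r Rabs_R0; lra.
  rewrite big_cons.
  have -> : (fun t => \big[Rplus/0]_(j <- i :: s) f t j) = fun t => f t i + \big[Rplus/0]_(j <- s) f t j.
    by apply: functional_extensionality => t; rewrite big_cons.
  exact: CV_plus.
exact.
Qed.


Fixpoint nsum (n : nat) (f : nat -> R) : R :=
  match n with O => 0 | S n' => nsum n' f + f n' end.

Lemma nsum_ext n f g : (forall i, (i < n)%N -> f i = g i) -> nsum n f = nsum n g.
Proof.
elim: n => [|n IH] h //=; rewrite IH ?h //; move=> i hi; apply: h; exact: ltnW.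
Qed.

Lemma nsum_lin n f g a : nsum n (fun i => f i + a * g i) = nsum n f + a * nsum n g.
Proof. elim: n => [|n IH] /=; [ring | rewrite IH; ring]. Qed.

Lemma nsum_nonneg n f : (forall i, (i < n)%N -> 0 <= f i) -> 0 <= nsum n f.
Proof.
elim: n => [|n IH] h /=; first lra.
have := h n (ltnSn n); have : 0 <= nsum n f by apply: IH => i hi; apply: h; exact: ltnW.
lra.
Qed.

Lemma nsum_Rsum n (f : nat -> R) : Rsum (fun i : 'I_n => f i) = nsum n f.
Proof.
elim: n => [|n IH]; first by rewrite /Rsum big_ord0.
by rewrite /Rsum big_ord_recr /= -IH.
Qed.

Section Farkas.
Variable T : Type.
Variable vadd : T -> T -> T.
Variable vscal : R -> T -> T.
Definition lin (f : T -> R) := forall y z a, f (vadd y (vscal a z)) = f y + a * f z.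

Lemma farkas m : forall (a : nat -> T -> R) (b : T -> R),
  (forall i, lin (a i)) -> lin b ->
  (forall y, (forall i, (i < m)%N -> 0 <= a i y) -> 0 <= b y) ->
  exists lam : nat -> R, (forall i, 0 <= lam i) /\
    forall y, b y = nsum m (fun i => lam i * a i y).
Proof.
elim: m => [|m IH] a b la lb h.
  exists (fun _ => 0); split => [i|y] /=; first lra.
  have h1 := h y (fun i (hi : (i < 0)%N) => False_ind _ (notF hi)).
  have h2 := h (vadd y (vscal (-2) y)) (fun i (hi : (i < 0)%N) => False_ind _ (notF hi)).
  rewrite lb in h2; lra.
case: (classic (exists y0, (forall i, (i < m)%N -> 0 <= a i y0) /\ b y0 < 0)) => [[y0 [hy0 hb0]]|hn].
- have ham : a m y0 < 0.
    apply: Rnot_le_lt => hge; have := h y0 => /(_ _) hh.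
    suff : 0 <= b y0 by lra.
    apply: hh => i; rewrite ltnS leq_eqVlt; case/orP => [/eqP -> // | hi]; exact: hy0.
  pose a' := fun i y => a i y - (a i y0 / a m y0) * a m y.
  pose b' := fun y => b y - (b y0 / a m y0) * a m y.
  have la' : forall i, lin (a' i).
    move=> i y z c; rewrite /a' !la; field; lra.
  have lb' : lin b'.
    move=> y z c; rewrite /b' lb la; field; lra.
  have h' : forall y, (forall i, (i < m)%N -> 0 <= a' i y) -> 0 <= b' y.
    move=> y hy.
    pose y' := vadd y (vscal (- (a m y / a m y0)) y0).
    have e1 : forall i, a i y' = a' i y.
      move=> i; rewrite /y' la /a'; field; lra.
    have e2 : b y' = b' y by rewrite /y' lb /b'; field; lra.
    rewrite -e2; apply: h => i; rewrite ltnS leq_eqVlt; case/orP => [/eqP -> | hi].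
      rewrite /y' la; right; field; lra.
    rewrite e1; exact: hy.
  have [mu [hmu hmub]] := IH a' b' la' lb' h'.
  pose lm := (b y0 - nsum m (fun i => mu i * a i y0)) / a m y0.
  exists (fun i => if (i < m)%N then mu i else lm); split.
    move=> i; case: (i < m)%N => //.
    have hs : 0 <= nsum m (fun i => mu i * a i y0).
      apply: nsum_nonneg => j hj; apply: Rmult_le_pos; [exact: hmu | exact: hy0].
    have e : lm * a m y0 = b y0 - nsum m (fun i => mu i * a i y0) by rewrite /lm; field; lra.
    nra.
  move=> y /=; rewrite ltnn.
  rewrite (nsum_ext (g := fun i => mu i * a i y)); last by move=> i ->.
  have := hmub y; rewrite /b'.
  rewrite (nsum_ext (g := fun i => mu i * a i y + (- (a m y / a m y0)) * (mu i * a i y0))); last first.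
    by move=> i _; rewrite /a'; field; lra.
  rewrite nsum_lin => e.
  have -> : b y = (b y - b y0 / a m y0 * a m y) + b y0 / a m y0 * a m y by ring.
  rewrite e /lm; field; lra.
- have h' : forall y, (forall i, (i < m)%N -> 0 <= a i y) -> 0 <= b y.
    move=> y hy; apply: Rnot_lt_le => hb; apply: hn; exists y; split => //.
  have [mu [hmu hmub]] := IH a b la lb h'.
  exists (fun i => if (i < m)%N then mu i else 0); split.
    by move=> i; case: (i < m)%N => //; lra.
  move=> y /=; rewrite ltnn (nsum_ext (g := fun i => mu i * a i y)); last by move=> i ->.
  rewrite hmub; ring.
Qed.
End Farkas.


Lemma Rsum_eq0 n (f : 'I_n -> R) : (forall i, f i = 0) -> Rsum f = 0.
Proof. move=> h; rewrite (Rsum_ext (g := fun _ => 0)) ?Rsum_0 //. Qed.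

Lemma mulmv_lin p q (M : mat p q) (y z : vec q) a i :
  mulmv M (fun l => y l + a * z l) i = mulmv M y i + a * mulmv M z i.
Proof.
rewrite /mulmv -Rsum_scal -Rsum_add; apply: Rsum_ext => j; ring.
Qed.

Lemma mulmv_scal p q (M : mat p q) (y : vec q) a i :
  mulmv M (fun l => a * y l) i = a * mulmv M y i.
Proof. rewrite /mulmv -Rsum_scal; apply: Rsum_ext => j; ring. Qed.

Lemma dot_scal n (d y : vec n) a : dot d (fun l => a * y l) = a * dot d y.
Proof. rewrite /dot -Rsum_scal; apply: Rsum_ext => j; ring. Qed.

Lemma dot_lin n (d y z : vec n) a :
  dot d (fun l => y l + a * z l) = dot d y + a * dot d z.
Proof. rewrite /dot -Rsum_scal -Rsum_add; apply: Rsum_ext => j; ring. Qed.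

Lemma dot_comm n (u v : vec n) : dot u v = dot v u.
Proof. rewrite /dot; apply: Rsum_ext => j; ring. Qed.

Lemma LP_strong m n2 (B : mat m n2) (d : vec n2) (c : vec m) (q : R) :
  (forall y, (forall i, 0 <= mulmv B y i) -> 0 <= dot d y) ->
  (forall y, (forall i, mulmv B y i >= c i) -> q <= dot d y) ->
  exists w, Wset B d w /\ q <= dot w c.
Proof.
move=> hray hlow.
pose T := (vec n2 * R)%type.
pose vadd := fun (p1 p2 : T) => ((fun l => p1.1 l + p2.1 l), p1.2 + p2.2) : T.
pose vscal := fun (a : R) (p : T) => ((fun l => a * p.1 l), a * p.2) : T.
pose af := fun (i : nat) (p : T) => match (insub i : option 'I_m) with
   | Some b => mulmv B p.1 b + c b * p.2 | None => - p.2 end.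
pose bf := fun (p : T) => dot d p.1 + q * p.2.
have la : forall i, lin vadd vscal (af i).
  move=> i y z a; rewrite /af; case: (insub i) => [b|] /=; last ring.
  rewrite mulmv_lin; ring.
have lb : lin vadd vscal bf.
  move=> y z a; rewrite /bf /= dot_lin; ring.
have hyp : forall p, (forall i, (i < m.+1)%N -> 0 <= af i p) -> 0 <= bf p.
  move=> [y t] hp.
  have ht : 0 <= - t.
    have := hp m (ltnSn m); rewrite /af insubF ?ltnn //.
  have hb : forall b : 'I_m, 0 <= mulmv B y b + c b * t.
    move=> b; have := hp b (ltnW (ltn_ord b)); by rewrite /af valK.
  rewrite /bf /=.
  case: (Rle_lt_or_eq_dec t 0 ltac:(lra)) => [tn|t0].
  + have := hlow (fun l => / (- t) * y l).
    have hh : forall i, mulmv B (fun l => / (- t) * y l) i >= c i.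
      move=> i; rewrite mulmv_scal; have := hb i => hbi.
      have e : / (- t) * mulmv B y i = c i + / (- t) * (mulmv B y i + c i * t) by field; lra.
      rewrite e; have : 0 <= / (- t) * (mulmv B y i + c i * t).
        apply: Rmult_le_pos => //; apply: Rlt_le; apply: Rinv_0_lt_compat; lra.
      lra.
    move=> /(_ hh); rewrite dot_scal => hq.
    have e : dot d y = (- t) * (/ (- t) * dot d y) by field; lra.
    rewrite e; nra.
  + subst t; rewrite Rmult_0_r Rplus_0_r; apply: hray => i.
    have := hb i; rewrite Rmult_0_r Rplus_0_r; done.
have [lam [hlam hid]] := farkas la lb hyp.
pose w := fun b : 'I_m => lam b.
have key : forall p, bf p = Rsum (fun b => w b * (mulmv B p.1 b + c b * p.2)) - lam m * p.2.
  move=> p; rewrite hid /= -nsum_Rsum.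
  rewrite (Rsum_ext (g := fun b : 'I_m => w b * (mulmv B p.1 b + c b * p.2))); last first.
    by move=> b; rewrite /af valK.
  rewrite /af insubF ?ltnn //; ring.
have mul0 : forall i, mulmv B (fun _ => 0) i = 0.
  move=> i; rewrite /mulmv; apply: Rsum_eq0 => j; ring.
exists w; split; first split.
- by move=> i; exact: hlam.
- move=> j.
  have := key ((fun l => if l == j then 1 else 0), 0).
  rewrite /bf /= /dot Rsum_delta => e.
  have -> : d j = Rsum (fun b : 'I_m => w b * (mulmv B (fun l => if l == j then 1 else 0) b + c b * 0)) by lra.
  rewrite /trmv; apply: Rsum_ext => b.
  rewrite /mulmv Rsum_delta; ring.
- have := key ((fun _ => 0), 1); rewrite /bf /= => e.
  have e2 : dot d (fun _ => 0) = 0 by rewrite /dot; apply: Rsum_eq0 => j; ring.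
  rewrite e2 in e.
  rewrite (Rsum_ext (g := fun b => w b * c b)) in e; last by move=> b; rewrite mul0; ring.
  rewrite /dot; have := hlam m; lra.
Qed.


Lemma trmv_lin p q (M : mat p q) (y z : vec p) a j :
  trmv M (fun l => y l + a * z l) j = trmv M y j + a * trmv M z j.
Proof. rewrite /trmv -Rsum_scal -Rsum_add; apply: Rsum_ext => i; ring. Qed.

Lemma trmv_scal p q (M : mat p q) (y : vec p) a j :
  trmv M (fun l => a * y l) j = a * trmv M y j.
Proof. rewrite /trmv -Rsum_scal; apply: Rsum_ext => i; ring. Qed.

Lemma dot_scall n (v c : vec n) a : dot (fun l => a * v l) c = a * dot v c.
Proof. rewrite /dot -Rsum_scal; apply: Rsum_ext => i; ring. Qed.

Lemma dot_linl n (u v c : vec n) a :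
  dot (fun l => u l + a * v l) c = dot u c + a * dot v c.
Proof. rewrite /dot -Rsum_scal -Rsum_add; apply: Rsum_ext => i; ring. Qed.

Lemma argmin_seq n (P : 'I_n -> Prop) (f : 'I_n -> R) (s : seq 'I_n) :
  (exists i, i \in s /\ P i) ->
  exists i0, P i0 /\ forall i, i \in s -> P i -> f i0 <= f i.
Proof.
elim: s => [|x s IH] [i [hi hP]]; first by rewrite in_nil in hi.
case: (classic (exists j, j \in s /\ P j)) => [hs|hs].
- have [i0 [h0 hmin]] := IH hs.
  case: (classic (P x /\ f x < f i0)) => [[hx hlt]|hn].
  + exists x; split => // j; rewrite in_cons => /orP [/eqP -> _ | hj hPj]; first lra.
    have := hmin j hj hPj; lra.
  + exists i0; split => // j; rewrite in_cons => /orP [/eqP -> hPx | hj hPj]; last exact: hmin.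
    apply: Rnot_lt_le => hlt; apply: hn; split => //; lra.
- have hx : P x.
    move: hi; rewrite in_cons => /orP [/eqP <- // | hi]; exfalso; apply: hs; by exists i.
  exists x; split => // j; rewrite in_cons => /orP [/eqP -> _ | hj hPj]; first lra.
  exfalso; apply: hs; by exists j.
Qed.

Lemma argmin_fin n (P : 'I_n -> Prop) (f : 'I_n -> R) :
  (exists i, P i) -> exists i0, P i0 /\ forall i, P i -> f i0 <= f i.
Proof.
move=> [i hi]; have [|i0 [h0 hm]] := @argmin_seq n P f (enum 'I_n).
  by exists i; rewrite mem_enum.
exists i0; split => // j hj; apply: hm => //; by rewrite mem_enum.
Qed.

Definition supp m (w : vec m) := [pred i : 'I_m | if Rlt_dec 0 (w i) then true else false].

Lemma in_supp m (w : vec m) i : (i \in supp w) <-> 0 < w i.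
Proof. rewrite /supp inE; case: Rlt_dec => //. Qed.

Section EP.
Variables (m n2 : nat) (B : mat m n2) (d : vec n2) (c : vec m).

Lemma move_step (w g : vec m) : Wset B d w -> (forall j, trmv B g j = 0) ->
  (forall i, w i = 0 -> g i = 0) -> (exists i, g i < 0) -> 0 <= dot g c ->
  exists w', Wset B d w' /\ dot w c <= dot w' c /\ (#|supp w'| < #|supp w|)%N.
Proof.
move=> [hw0 hwB] hgB hsupp hneg hgc.
have [i0 [hi0 hmin]] := argmin_fin (fun i => w i / (- g i)) hneg.
pose s := w i0 / (- g i0).
have hs : 0 <= s.
  rewrite /s /Rdiv; apply: Rmult_le_pos; first exact: hw0.
  apply: Rlt_le; apply: Rinv_0_lt_compat; lra.
pose w' := fun i => w i + s * g i.
have hw'0 : forall i, 0 <= w' i.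
  move=> i; rewrite /w'; case: (Rlt_le_dec (g i) 0) => hgi.
  + have := hmin i hgi; rewrite -/s => hsi.
    have e : w i = w i / (- g i) * (- g i) by field; lra.
    have := hw0 i; nra.
  + have := hw0 i; nra.
have hW' : Wset B d w'.
  split; first exact: hw'0.
  by move=> j; rewrite /w' trmv_lin hgB hwB Rmult_0_r Rplus_0_r.
exists w'; split; first exact: hW'.
split.
- rewrite /w' dot_linl; nra.
- apply: proper_card; apply/properP; split.
  + apply/subsetP => i; rewrite !in_supp /w' => hpos.
    case: (Rle_lt_or_eq_dec 0 (w i) (hw0 i)) => e; first exact: e.
    rewrite (hsupp i (esym e)) -e in hpos; lra.
  + exists i0.
    * rewrite in_supp; case: (Rle_lt_or_eq_dec 0 (w i0) (hw0 i0)) => e; first exact: e.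
      have := hsupp i0 (esym e); lra.
    * apply/negP; rewrite in_supp /w' /s => hp.
      have e : w i0 + w i0 / - g i0 * g i0 = 0 by field; lra.
      lra.
Qed.

Variable K : R.
Hypothesis hK : forall w, Wset B d w -> dot w c <= K.

Lemma choose_g (w h : vec m) : Wset B d w -> (forall j, trmv B h j = 0) ->
  (forall i, w i = 0 -> h i = 0) -> (exists i, h i <> 0) -> 0 <= dot h c ->
  exists w', Wset B d w' /\ dot w c <= dot w' c /\ (#|supp w'| < #|supp w|)%N.
Proof.
move=> hw hB hs [i hi] hc.
case: (classic (exists i, h i < 0)) => [hn|hn].
  exact: move_step.
have hpos : forall i, 0 <= h i by move=> j; apply: Rnot_lt_le => hj; apply: hn; exists j.
have hc0 : dot h c <= 0.
  apply: Rnot_lt_le => hlt.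
  pose sc := (K - dot w c + 1) / dot h c.
  have hwK := hK hw.
  have hsc : 0 <= sc by rewrite /sc /Rdiv; apply: Rmult_le_pos; [lra | apply: Rlt_le; apply: Rinv_0_lt_compat; lra].
  have hW : Wset B d (fun l => w l + sc * h l).
    case: hw => hw0 hwB; split.
    - move=> l; have := hw0 l; have := hpos l; nra.
    - by move=> j; rewrite trmv_lin hB hwB; ring.
  have := hK hW; rewrite dot_linl.
  have -> : sc * dot h c = K - dot w c + 1 by rewrite /sc; field; lra.
  lra.
apply: (@move_step w (fun l => -1 * h l)) => //.
- by move=> j; rewrite trmv_scal hB; ring.
- by move=> l hl; rewrite hs //; ring.
- exists i; have := hpos i; lra.
- rewrite dot_scall; lra.
Qed.

Lemma EP_reduce N : forall w, Wset B d w -> (#|supp w| <= N)%N ->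
  exists w', extreme_point (Wset B d) w' /\ dot w c <= dot w' c.
Proof.
elim: N => [|N IH] w hw hN.
all: case: (classic (extreme_point (Wset B d) w)) => [he|hne]; first by exists w; split => //; lra.
all: have [w1 [w2 [h1 [h2 [t [ht [hwt hneq]]]]]]] : exists w1 w2, Wset B d w1 /\ Wset B d w2 /\
        exists t, 0 < t < 1 /\ (forall i, w i = t * w1 i + (1 - t) * w2 i) /\ w1 <> w2
   by (apply: NNPP => H; apply: hne; split => // w1 w2 h1 h2 t ht hwt; apply: NNPP => hn;
       apply: H; exists w1, w2; split => //; split => //; exists t; tauto).
all: pose h := fun l => w1 l + -1 * w2 l.
all: have hB : forall j, trmv B h j = 0
    by move=> j; rewrite /h trmv_lin (proj2 h1) (proj2 h2); ring.
all: have hs : forall i, w i = 0 -> h i = 0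
    by move=> i hi; rewrite /h; have := hwt i; have := proj1 h1 i; have := proj1 h2 i; nra.
all: have hnz : exists i, h i <> 0
    by (apply: NNPP => H; apply: hneq; apply: functional_extensionality => i;
        apply: NNPP => hi; apply: H; exists i; rewrite /h; lra).
all: have [w' [hw' [hc' hcard]]] : exists w', Wset B d w' /\ dot w c <= dot w' c /\ (#|supp w'| < #|supp w|)%N
  by (case: (Rle_lt_dec 0 (dot h c)) => hc;
   [ apply: (@choose_g w h) => //
   | apply: (@choose_g w (fun l => -1 * h l)) => //;
     [ by move=> j; rewrite trmv_scal hB; ring
     | by move=> i hi; rewrite hs //; ring
     | by case: hnz => i hi; exists i; lra
     | rewrite dot_scall; lra ] ]).
- by move: hcard; rewrite (leqn0 _) in hN; rewrite (eqP hN).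
- have [w'' [he h'']] := IH w' hw' (leq_trans (hcard : (#|supp w'| < #|supp w|)%N) hN).
  by exists w''; split => //; lra.
Qed.

Lemma EP (w : vec m) : Wset B d w ->
  exists w', extreme_point (Wset B d) w' /\ dot w c <= dot w' c.
Proof. move=> hw; exact: (@EP_reduce #|supp w|). Qed.

End EP.


Lemma Rsum_prod n p (a : 'I_n -> R) (b : 'I_p -> R) :
  Rsum (fun i => Rsum (fun j => a i * b j)) = Rsum a * Rsum b.
Proof.
rewrite (Rsum_ext (g := fun i => a i * Rsum b)); last by move=> i; rewrite Rsum_scal.
by rewrite Rsum_scalr.
Qed.

Lemma quad_lr n p (z : vec n) (P : 'I_p -> 'I_n -> R) (Q : 'I_n -> 'I_p -> R) :
  Rsum (fun i => Rsum (fun j => z i * z j * Rsum (fun l => P l i * Q j l))) =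
  Rsum (fun l => Rsum (fun i => P l i * z i) * Rsum (fun j => Q j l * z j)).
Proof.
transitivity (Rsum (fun i => Rsum (fun l => Rsum (fun j => z i * z j * (P l i * Q j l))))).
  apply: Rsum_ext => i; rewrite -Rsum_swap; apply: Rsum_ext => j; by rewrite Rsum_scal.
rewrite Rsum_swap; apply: Rsum_ext => l; rewrite -Rsum_prod.
apply: Rsum_ext => i; apply: Rsum_ext => j; ring.
Qed.

Lemma Rsum2_lin n p (a1 a2 a3 a4 a5 : R) (f1 f2 f3 f4 f5 : 'I_n -> 'I_p -> R) :
  Rsum (fun i => Rsum (fun j => a1 * f1 i j + a2 * f2 i j + a3 * f3 i j + a4 * f4 i j + a5 * f5 i j)) =
  a1 * Rsum (fun i => Rsum (f1 i)) + a2 * Rsum (fun i => Rsum (f2 i)) + a3 * Rsum (fun i => Rsum (f3 i))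
  + a4 * Rsum (fun i => Rsum (f4 i)) + a5 * Rsum (fun i => Rsum (f5 i)).
Proof.
rewrite -!Rsum_scal -!Rsum_add; apply: Rsum_ext => i.
rewrite -!Rsum_scal -!Rsum_add; apply: Rsum_ext => j; ring.
Qed.

Section Quad.
Variables (n1 n2 m k : nat) (A : mat m n1) (B : mat m n2) (d : vec n2) (F : mat m k.+1) (x : vec n1).

Definition vpart (z : vec (k.+1 + m)) : vec k.+1 := fun a => z (lshift m a).
Definition wpart (z : vec (k.+1 + m)) : vec m := fun b => z (rshift k.+1 b).
Definition gvec (v : vec k.+1) : vec m := fun b => mulmv F v b - mulmv A x b * v ord0.

Lemma S1 (z : vec (k.+1 + m)) : Rsum (fun i => z i * @g1 k m i) = vpart z ord0.
Proof.
rewrite Rsum_split /g1.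
rewrite (Rsum_ext (f := fun a => _) (g := fun a => vpart z a * (if a == ord0 then 1 else 0))); last first.
  by move=> a; rewrite split_l /e1.
rewrite Rsum_delta Rsum_eq0 ?Rplus_0_r // => b; rewrite split_r; ring.
Qed.

Lemma S2 (z : vec (k.+1 + m)) :
  Rsum (fun i => Rsum (fun j => z i * Gmat A F x i j * z j)) = 2 * dot (wpart z) (gvec (vpart z)).
Proof.
rewrite Rsum_split.
rewrite (Rsum_ext (f := fun a => _) (g := fun a => Rsum (fun b => vpart z a * (F b a - mulmv A x b * e1 a) * wpart z b))); last first.
  move=> a; rewrite Rsum_split Rsum_eq0 ?Rplus_0_l; last by move=> a'; rewrite /Gmat split_l split_l; ring.
  by apply: Rsum_ext => b; rewrite /Gmat split_l split_r.
rewrite (Rsum_ext (f := fun b => _) (g := fun b => Rsum (fun a => vpart z a * (F b a - mulmv A x b * e1 a) * wpart z b))); last first.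
  move=> b; rewrite Rsum_split [X in _ + X]Rsum_eq0 ?Rplus_0_r; last by move=> b'; rewrite /Gmat split_r split_r; ring.
  by apply: Rsum_ext => a; rewrite /Gmat split_r split_l /vpart /wpart; ring.
rewrite Rsum_swap /dot -Rsum_add -Rsum_scal; apply: Rsum_ext => b.
rewrite /gvec /mulmv -Rsum_add.
have -> : vpart z ord0 = Rsum (fun a => vpart z a * e1 a).
  by rewrite /e1 Rsum_delta.
set ax := Rsum (fun j : 'I_n1 => A b j * x j).
transitivity (2 * wpart z b * (Rsum (fun i => F b i * vpart z i) - Rsum (fun i => ax * (vpart z i * e1 i)))); last by rewrite Rsum_scal; ring.
rewrite -Rsum_sub -Rsum_scal; apply: Rsum_ext => a; ring.
Qed.

Lemma Ez (z : vec (k.+1 + m)) l :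
  Rsum (fun i => @Emat n2 m k B d l i * z i) = trmv B (wpart z) l - d l * vpart z ord0.
Proof.
rewrite Rsum_split.
rewrite (Rsum_ext (f := fun a => _) (g := fun a => - d l * (vpart z a * (if a == ord0 then 1 else 0)))); last first.
  by move=> a; rewrite /Emat split_l /e1 /vpart; ring.
rewrite Rsum_scal Rsum_delta /trmv.
rewrite (Rsum_ext (f := fun b => _) (g := fun b => B b l * wpart z b)); last first.
  by move=> b; rewrite /Emat split_r.
ring.
Qed.

Lemma S5 (z : vec (k.+1 + m)) :
  Rsum (fun i => Rsum (fun j => z i * idmat i j * z j)) = sqnorm (vpart z) + sqnorm (wpart z).
Proof.
rewrite (Rsum_ext (g := fun i => z i * z i)); last first.
  move=> i; rewrite -[X in _ = X](Rsum_delta (fun j => z i * z j)).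
  by apply: Rsum_ext => j; rewrite /idmat eq_sym; case: (j == i); ring.
by rewrite Rsum_split.
Qed.

Lemma Qform (z : vec (k.+1 + m)) lam (Lam : mat (k.+1 + m) n2) rho :
  Rsum (fun i => Rsum (fun j => z i * copos_matrix A B d F x lam Lam rho i j * z j)) =
  lam * (vpart z ord0 * vpart z ord0) - dot (wpart z) (gvec (vpart z))
  + Rsum (fun l => (trmv B (wpart z) l - d l * vpart z ord0) * Rsum (fun i => Lam i l * z i))
  + rho * (sqnorm (vpart z) + sqnorm (wpart z)).
Proof.
rewrite (Rsum_ext (g := fun i => Rsum (fun j =>
   lam * ((z i * @g1 k m i) * (@g1 k m j * z j)) + (- / 2) * (z i * Gmat A F x i j * z j)
   + / 2 * (z i * z j * Rsum (fun l => @Emat n2 m k B d l i * Lam j l))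
   + / 2 * (z i * z j * Rsum (fun l => Lam i l * @Emat n2 m k B d l j))
   + rho * (z i * idmat i j * z j)))); last first.
  by move=> i; apply: Rsum_ext => j; rewrite /copos_matrix; ring.
rewrite Rsum2_lin Rsum_prod S1.
have -> : Rsum (fun i => @g1 k m i * z i) = vpart z ord0.
  by rewrite -S1; apply: Rsum_ext => i; ring.
rewrite S2 S5 quad_lr.
have -> : Rsum (fun i => Rsum (fun j => z i * z j * Rsum (fun l => Lam i l * @Emat n2 m k B d l j))) =
          Rsum (fun i => Rsum (fun j => z i * z j * Rsum (fun l => @Emat n2 m k B d l i * Lam j l))).
  rewrite Rsum_swap; apply: Rsum_ext => i; apply: Rsum_ext => j.
  have -> : Rsum (fun l => Lam j l * @Emat n2 m k B d l i) = Rsum (fun l => @Emat n2 m k B d l i * Lam j l).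
    by apply: Rsum_ext => l; ring.
  ring.
rewrite quad_lr.
rewrite (Rsum_ext (f := fun l => _) (g := fun l => (trmv B (wpart z) l - d l * vpart z ord0) * Rsum (fun i => Lam i l * z i))); last first.
  by move=> l; rewrite Ez.
field.
Qed.

End Quad.


Lemma sqnorm_nonneg n (u : vec n) : 0 <= sqnorm u.
Proof. apply: Rsum_nonneg => i; nra. Qed.

Lemma dot_bound n (a b : vec n) beta : 0 < beta ->
  dot a b <= (beta * sqnorm a + sqnorm b / beta) / 2.
Proof.
move=> hb.
have e : Rsum (fun i => (beta * (a i * a i) + (b i * b i) / beta) / 2) =
    (beta * sqnorm a + sqnorm b / beta) / 2.
  rewrite (Rsum_ext (g := fun i => (/2 * beta) * (a i * a i) + (/2 * /beta) * (b i * b i))); last first.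
    move=> i; field; lra.
  rewrite Rsum_add !Rsum_scal /sqnorm /dot; field; lra.
rewrite -e /dot.
apply: Rsum_le => i.
have hi : 0 <= (beta * a i - b i) * (beta * a i - b i) / beta.
  rewrite /Rdiv; apply: Rmult_le_pos; first exact: Rle_0_sqr.
  apply: Rlt_le; apply: Rinv_0_lt_compat; lra.
have e2 : (beta * a i - b i) * (beta * a i - b i) / beta = beta * (a i * a i) + b i * b i / beta - 2 * (a i * b i).
  field; lra.
lra.
Qed.

Lemma dot_trmv m n2 (B : mat m n2) (w : vec m) (y : vec n2) :
  dot (fun l => trmv B w l) y = dot w (fun b => mulmv B y b).
Proof.
rewrite /dot /trmv /mulmv.
rewrite (Rsum_ext (g := fun l => Rsum (fun i => B i l * w i * y l))); last by move=> l; rewrite Rsum_scalr.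
rewrite Rsum_swap; apply: Rsum_ext => i; rewrite -Rsum_scal; apply: Rsum_ext => l; ring.
Qed.

Lemma weak_dual m n2 (B : mat m n2) (w c : vec m) (y : vec n2) :
  (forall b, 0 <= w b) -> (forall b, mulmv B y b >= c b) ->
  dot w c <= dot (fun l => trmv B w l) y.
Proof.
move=> hw hy; rewrite dot_trmv; apply: Rsum_le => b.
have := hw b; have := hy b; nra.
Qed.

Lemma glb_ex (S : R -> Prop) : (exists s, S s) -> (exists L, forall s, S s -> L <= s) ->
  exists q, glb_of S q.
Proof.
move=> [s0 hs0] [L hL].
have hb : bound (fun t => S (- t)).
  exists (- L) => t ht; have := hL _ ht; lra.
have hne : exists t, S (- t) by exists (- s0); rewrite Ropp_involutive.
have [M [hM1 hM2]] := completeness _ hb hne.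
exists (- M); split.
- move=> s hs; have : - s <= M by apply: hM1; rewrite Ropp_involutive.
  lra.
- move=> v hv; have : M <= - v.
    apply: hM2 => t ht; have := hv _ ht; lra.
  lra.
Qed.

Lemma lub_ex (S : R -> Prop) : (exists s, S s) -> (exists K, forall s, S s -> s <= K) ->
  exists p, lub_of S p.
Proof.
move=> hne [K hK].
have hb : bound S by exists K.
have [M [hM1 hM2]] := completeness _ hb hne.
exists M; split => //.
Qed.

Lemma phi_ge (phi : nat -> nat) : (forall t, (phi t < phi t.+1)%N) -> forall t, (t <= phi t)%N.
Proof.
move=> h; elim => [|t IH] //; apply: leq_ltn_trans IH (h t).
Qed.


Section Main.
Variables (n1 n2 m k : nat) (A : mat m n1) (B : mat m n2) (c : vec n1) (d : vec n2) (F : mat m k.+1)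
  (X : vec n1 -> Prop) (Uhat : vec k.+1 -> Prop).
Hypothesis hUv : convexR Uhat.
Hypothesis hUcone : coneR Uhat.
Hypothesis hUpos : forall u, Uhat u -> 0 <= u ord0.
Hypothesis hUne : exists u, Uset Uhat u.
Hypothesis hUcpt : compactR (Uset Uhat).
Hypothesis hA3up : exists x y, RLP_feasible A B F X Uhat x y /\
             exists M, forall u, Uset Uhat u -> dot c x + dot d (y u) <= M.
Hypothesis hA3low : exists L, forall x y, RLP_feasible A B F X Uhat x y ->
             forall M, (forall u, Uset Uhat u -> dot c x + dot d (y u) <= M) -> L <= M.
Hypothesis hA4 : forall x u, X x -> Uset Uhat u ->
           exists y : vec n2, forall i, mulmv B y i >= mulmv F u i - mulmv A x i.
Variable r : R.
Hypothesis hr : 0 < r.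
Hypothesis hrb : forall u w, Uset Uhat u -> extreme_point (Wset B d) w -> sqnorm u + sqnorm w <= r.
Variable x : vec n1.
Hypothesis hx : X x.

Definition cu (u : vec k.+1) : vec m := fun b => mulmv F u b - mulmv A x b.

Lemma noray : forall y0, (forall i, 0 <= mulmv B y0 i) -> 0 <= dot d y0.
Proof.
move=> y0 hy0; apply: Rnot_lt_le => hneg.
have [xb [yb [[hXb hfb] [Mb hMb]]]] := hA3up.
have [L hL] := hA3low.
pose s := (Mb - L + 1) / (- dot d y0).
have hs : 0 <= s.
  rewrite /s /Rdiv; apply: Rmult_le_pos; first by have := hL xb yb (conj hXb hfb) Mb hMb; lra.
  apply: Rlt_le; apply: Rinv_0_lt_compat; lra.
have := hL xb (fun u l => yb u l + s * y0 l).
have hfeas : RLP_feasible A B F X Uhat xb (fun u l => yb u l + s * y0 l).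
  split => // u hu i; rewrite mulmv_lin; have := hfb u hu i; have := hy0 i; nra.
move=> /(_ hfeas (Mb + s * dot d y0)).
have : L <= Mb + s * dot d y0.
  apply: (hL _ _ hfeas) => u hu; rewrite dot_lin; have := hMb u hu; lra.
have -> : s * dot d y0 = - (Mb - L + 1) by rewrite /s; field; lra.
lra.
Qed.

Lemma Wne : exists w0, Wset B d w0.
Proof.
have : exists w, Wset B d w /\ 0 <= dot w (fun _ => 0).
  apply: (@LP_strong m n2 B d (fun _ => 0) 0 noray).
  by move=> y hy; apply: noray => i; have := hy i; lra.
by case=> w [hw _]; exists w.
Qed.

Lemma inner_ex u : Uset Uhat u -> exists q, inner_value A B d F x u q.
Proof.
move=> hu; apply: glb_ex.
  have [y hy] := hA4 hx hu; by exists (dot d y), y.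
have [w0 hw0] := Wne.
exists (dot w0 (cu u)) => s [y [hy ->]].
apply: Rle_trans (weak_dual (proj1 hw0) hy) _.
by rewrite /dot; apply: Req_le; apply: Rsum_ext => l; rewrite (proj2 hw0).
Qed.

Lemma inner_lower u q w : inner_value A B d F x u q -> Wset B d w -> dot w (cu u) <= q.
Proof.
move=> [_ hq] hw; apply: hq => s [y [hy ->]].
apply: Rle_trans (weak_dual (proj1 hw) hy) _.
by rewrite /dot; apply: Req_le; apply: Rsum_ext => l; rewrite (proj2 hw).
Qed.

Lemma inner_ext u q : Uset Uhat u -> inner_value A B d F x u q ->
  exists w, extreme_point (Wset B d) w /\ q <= dot w (cu u).
Proof.
move=> hu hq.
have [w [hw hqw]] := @LP_strong m n2 B d (cu u) q noray (fun y hy => proj1 hq _ (ex_intro _ y (conj hy erefl))).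
have [y hy] := hA4 hx hu.
have hK : forall w, Wset B d w -> dot w (cu u) <= dot d y.
  move=> w' hw'; apply: Rle_trans (weak_dual (proj1 hw') hy) _.
  by rewrite /dot; apply: Req_le; apply: Rsum_ext => l; rewrite (proj2 hw').
have [w' [he hw']] := EP hK hw.
exists w'; split => //; lra.
Qed.

Lemma term_bound f w u rr : w * w + u * u <= rr -> f * (w * u) <= Rabs f * rr.
Proof.
move=> h.
have h1 : w * u <= rr by nra.
have h2 : - rr <= w * u by nra.
case: (Rle_lt_dec 0 f) => hf.
- rewrite Rabs_right; [nra | lra].
- rewrite Rabs_left; [nra | lra].
Qed.

Lemma S_bounded : exists K, forall u q, Uset Uhat u -> inner_value A B d F x u q -> q <= K.
Proof.
exists (Rsum (fun b => Rsum (fun a => Rabs (F b a) * r) + (r + mulmv A x b * mulmv A x b) / 2)).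
move=> u q hu hq.
have [w [hw hqw]] := inner_ext hu hq.
have hb := hrb hu hw.
have hsu : forall a, u a * u a <= sqnorm u.
  move=> a; rewrite /sqnorm /dot; apply: (@Rsum_term _ (fun i => u i * u i) a) => i; nra.
have hsw : forall b, w b * w b <= sqnorm w.
  move=> b; rewrite /sqnorm /dot; apply: (@Rsum_term _ (fun i => w i * w i) b) => i; nra.
have hsu0 := sqnorm_nonneg u.
have hsw0 := sqnorm_nonneg w.
apply: Rle_trans hqw _; rewrite /dot; apply: Rsum_le => b.
rewrite /cu Rmult_minus_distr_l /mulmv -Rsum_scal.
have : Rsum (fun a => w b * (F b a * u a)) <= Rsum (fun a => Rabs (F b a) * r).
  apply: Rsum_le => a.
  have -> : w b * (F b a * u a) = F b a * (w b * u a) by ring.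
  apply: term_bound; have := hsu a; have := hsw b; lra.
have : - (w b * Rsum (fun j => A b j * x j)) <= (r + Rsum (fun j => A b j * x j) * Rsum (fun j => A b j * x j)) / 2.
  set S := Rsum (fun j => A b j * x j).
  have hsq : 0 <= (w b + S) * (w b + S) by apply: Rle_0_sqr.
  have := hsw b; nra.
lra.
Qed.

Lemma nat_large Y : exists N : nat, Y < INR N.
Proof. have [n hn] := INR_archimed 1 Y ltac:(lra); exists n; lra. Qed.

Lemma U_add u v : Uhat u -> Uhat v -> Uhat (fun i => u i + v i).
Proof.
move=> hu hv.
have h := hUv hu hv (conj (Rlt_le 0 (/2) ltac:(lra)) (Rlt_le (/2) 1 ltac:(lra))).
have := proj2 hUcone _ h 2 ltac:(lra).
have -> : (fun i => 2 * (/ 2 * u i + (1 - / 2) * v i)) = (fun i => u i + v i) by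
  apply: functional_extensionality => i; field.
done.
Qed.

Lemma U_zero v : Uhat v -> v ord0 = 0 -> forall a, v a = 0.
Proof.
move=> hv h0 a; apply: NNPP => hva.
have [u0 [hu0 hu01]] := hUne.
pose s := fun (n : nat) i => u0 i + INR n * v i.
have hs : forall n, Uset Uhat (s n).
  move=> n; split; first by apply: U_add => //; apply: (proj2 hUcone) => //; apply: pos_INR.
  by rewrite /s hu01 h0; ring.
have [phi [l [hphi [_ hcv]]]] := hUcpt hs.
have [N hN] := hcv a 1 ltac:(lra).
have hva' : 0 < Rabs (v a) by apply: Rabs_pos_lt.
have [T hT] := nat_large ((Rabs (l a) + Rabs (u0 a) + 1) / Rabs (v a)).
pose t := maxn N T.
have htN : (t >= N)%coq_nat by apply/leP; rewrite /t leq_maxl.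
have := hN t htN; rewrite /R_dist /s => hd.
have hpt : INR T <= INR (phi t).
  apply: le_INR; apply/leP; apply: leq_trans (phi_ge hphi t); by rewrite /t leq_maxr.
have hbig : Rabs (l a) + Rabs (u0 a) + 1 < INR (phi t) * Rabs (v a).
  have e : (Rabs (l a) + Rabs (u0 a) + 1) = (Rabs (l a) + Rabs (u0 a) + 1) / Rabs (v a) * Rabs (v a) by field; lra.
  rewrite e; apply: Rmult_lt_compat_r => //; lra.
have e2 : INR (phi t) * Rabs (v a) = Rabs (INR (phi t) * v a).
  rewrite Rabs_mult (Rabs_right (INR (phi t))) //; apply: Rle_ge; apply: pos_INR.
have ht2 : Rabs (l a - u0 a) <= Rabs (l a) + Rabs (u0 a).
  have := Rabs_triang (l a) (- u0 a); rewrite Rabs_Ropp; rewrite /Rminus; lra.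
have := Rabs_triang_inv (INR (phi t) * v a) (l a - u0 a).
have -> : INR (phi t) * v a - (l a - u0 a) = u0 a + INR (phi t) * v a - l a by ring.
lra.
Qed.


Lemma dual_lower lam Lam rho :
  COP (@prod_cone k.+1 m Uhat) (copos_matrix A B d F x lam Lam rho) -> 0 <= rho ->
  forall u q, Uset Uhat u -> inner_value A B d F x u q -> q <= lam + r * rho.
Proof.
move=> hcop hrho u q hu hq.
have [w [hw hqw]] := inner_ext hu hq.
pose z : vec (k.+1 + m) := fun i => match split i with inl a => u a | inr b => w b end.
have hv : vpart z = u by apply: functional_extensionality => a; rewrite /vpart /z split_l.
have hwp : wpart z = w by apply: functional_extensionality => b; rewrite /wpart /z split_r.
have hz : prod_cone Uhat z.
  split; first by rewrite -/(vpart z) hv; exact: (proj1 hu).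
  move=> b; rewrite /z split_r; exact: (proj1 (proj1 hw) b).
have := hcop z hz; rewrite Qform hv hwp.
have -> : gvec A F x u = cu u.
  by apply: functional_extensionality => b; rewrite /gvec /cu (proj2 hu) Rmult_1_r.
rewrite Rsum_eq0; last by move=> l; rewrite (proj2 (proj1 hw)) (proj2 hu); ring.
have := hrb hu hw; rewrite (proj2 hu); nra.
Qed.


Definition Lamt (t : R) : mat (k.+1 + m) n2 := fun i l =>
  match split i with inl a => - (t * (d l * e1 a)) | inr b => t * B b l end.

Lemma cop_construct t lam rho : 0 <= t -> 0 <= rho ->
  (forall u w, Uset Uhat u -> (forall b, 0 <= w b) ->
     dot w (cu u) - t * sqnorm (fun l => trmv B w l - d l) - rho * sqnorm w <= lam) ->
  COP (@prod_cone k.+1 m Uhat) (copos_matrix A B d F x lam (Lamt t) rho).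
Proof.
move=> ht hrho hT z [hvU hw].
have hLT : forall l, Rsum (fun i => Lamt t i l * z i) = t * (trmv B (wpart z) l - d l * vpart z ord0).
  move=> l; rewrite Rsum_split.
  rewrite (Rsum_ext (f := fun a => _) (g := fun a => (- t * d l) * (vpart z a * (if a == ord0 then 1 else 0)))); last first.
    by move=> a; rewrite /Lamt split_l /e1 /vpart; ring.
  rewrite Rsum_scal Rsum_delta /trmv.
  rewrite (Rsum_ext (f := fun b => _) (g := fun b => t * (B b l * wpart z b))); last first.
    by move=> b; rewrite /Lamt split_r /wpart; ring.
  rewrite Rsum_scal; ring.
rewrite Qform.
rewrite (Rsum_ext (f := fun l => _) (g := fun l => t * ((trmv B (wpart z) l - d l * vpart z ord0) * (trmv B (wpart z) l - d l * vpart z ord0)))); last first.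
  by move=> l; rewrite hLT; ring.
rewrite Rsum_scal.
set v := vpart z; set w := wpart z.
have hw0 : forall b, 0 <= w b by move=> b; exact: hw.
have hsv := sqnorm_nonneg v.
have hsw := sqnorm_nonneg w.
have hv0 := hUpos hvU.
case: (Rle_lt_or_eq_dec 0 (v ord0) hv0) => hv0'; last first.
- have hvz := U_zero hvU (esym hv0').
  have -> : dot w (gvec A F x v) = 0.
    rewrite /dot; apply: Rsum_eq0 => b; rewrite /gvec /mulmv Rsum_eq0; last by move=> a; rewrite /v /vpart hvz; ring.
    rewrite -hv0'; ring.
  have hS : 0 <= Rsum (fun l => (trmv B w l - d l * v ord0) * (trmv B w l - d l * v ord0)).
    apply: Rsum_nonneg => l; nra.
  have hS' := Rmult_le_pos _ _ ht hS.
  have := Rmult_le_pos _ _ hrho (Rplus_le_le_0_compat _ _ hsv hsw).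
  rewrite -hv0' in hS' *; lra.
- set v0 := v ord0.
  have hv0p : 0 < v0 by exact: hv0'.
  pose u := fun a => / v0 * v a.
  pose w' := fun b => / v0 * w b.
  have hu : Uset Uhat u.
    split; first by apply: (proj2 hUcone) => //; apply: Rlt_le; apply: Rinv_0_lt_compat.
    rewrite /u; change (/ v0 * v0 = 1); field; lra.
  have hw' : forall b, 0 <= w' b.
    move=> b; rewrite /w'; apply: Rmult_le_pos; [apply: Rlt_le; apply: Rinv_0_lt_compat; lra | exact: hw0].
  have := hT u w' hu hw'.
  have e1' : dot w (gvec A F x v) = v0 * v0 * dot w' (cu u).
    rewrite /dot -Rsum_scal; apply: Rsum_ext => b.
    rewrite /cu /u mulmv_scal /gvec /w' -/v0; field; lra.
  have e2 : Rsum (fun l => (trmv B w l - d l * v0) * (trmv B w l - d l * v0)) =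
            v0 * v0 * sqnorm (fun l => trmv B w' l - d l).
    rewrite /sqnorm /dot -Rsum_scal; apply: Rsum_ext => l.
    rewrite /w' trmv_scal; field; lra.
  have e3 : sqnorm w = v0 * v0 * sqnorm w'.
    rewrite /sqnorm /dot -Rsum_scal; apply: Rsum_ext => b; rewrite /w'; field; lra.
  rewrite e1' e2 e3.
  have hS' := sqnorm_nonneg (fun l => trmv B w' l - d l).
  have hW' := sqnorm_nonneg w'.
  move=> hineq.
  have hpos : 0 <= v0 * v0 * (lam - (dot w' (cu u) - t * sqnorm (fun l => trmv B w' l - d l) - rho * sqnorm w')).
    apply: Rmult_le_pos; [nra | lra].
  nra.
Qed.


Lemma cv_const (a : R) : Un_cv (fun _ => a) a.
Proof. move=> e he; exists 0%nat => n _; rewrite /R_dist Rminus_diag_eq // Rabs_R0; lra. Qed.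

Lemma cv_eq (u : nat -> R) l l' : Un_cv u l -> l = l' -> Un_cv u l'.
Proof. by move=> h <-. Qed.

Lemma cv_eventually (u : nat -> R) eps : Un_cv u 0 -> 0 < eps -> exists N, forall t, (N <= t)%N -> u t < eps.
Proof.
move=> h he; have [N hN] := h eps he; exists N => t ht.
have := hN t (ssrnat.leP ht); rewrite /R_dist Rminus_0_r => hh.
have := Rle_abs (u t); lra.
Qed.

Lemma claimT rho delta p : 0 < rho -> 0 < delta ->
  (forall u q, Uset Uhat u -> inner_value A B d F x u q -> q <= p) ->
  exists t, 0 <= t /\ forall u w, Uset Uhat u -> (forall b, 0 <= w b) ->
    dot w (cu u) - t * sqnorm (fun l => trmv B w l - d l) - rho * sqnorm w <= p + delta.
Proof.
move=> hrho hdel hp.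
apply: NNPP => hneg.
have hseq : forall n : nat, exists uw : vec k.+1 * vec m, Uset Uhat uw.1 /\ (forall b, 0 <= uw.2 b) /\
   p + delta < dot uw.2 (cu uw.1) - INR n * sqnorm (fun l => trmv B uw.2 l - d l) - rho * sqnorm uw.2.
  move=> n; apply: NNPP => hn; apply: hneg; exists (INR n); split; first exact: pos_INR.
  move=> u w hu hw; apply: Rnot_lt_le => hlt; apply: hn; exists (u, w); split => //.
pose UW n := proj1_sig (constructive_indefinite_description _ (hseq n)).
have hUW : forall n, Uset Uhat (UW n).1 /\ (forall b, 0 <= (UW n).2 b) /\
   p + delta < dot (UW n).2 (cu (UW n).1) - INR n * sqnorm (fun l => trmv B (UW n).2 l - d l) - rho * sqnorm (UW n).2.
  move=> n; exact: (proj2_sig (constructive_indefinite_description _ (hseq n))).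
have [phi [us [hphi [hus hcv]]]] := hUcpt (fun n => proj1 (hUW n)).
pose cs := cu us.
pose e := fun t b => cu (UW (phi t)).1 b - cs b.
have hcb : forall b, Un_cv (fun t => cu (UW (phi t)).1 b) (cs b).
  move=> b; rewrite /cs /cu /=.
  apply: (CV_minus (fun t => mulmv F (UW (phi t)).1 b) (fun _ => mulmv A x b)); last exact: cv_const.
  rewrite /mulmv; apply: Rsum_cv => a.
  apply: (CV_mult (fun _ => F b a) (fun t => (UW (phi t)).1 a)); [exact: cv_const | exact: hcv].
have he : Un_cv (fun t => sqnorm (e t)) 0.
  apply: cv_eq.
    apply: Rsum_cv => b.
    have h1 : Un_cv (fun t => e t b) (cs b - cs b).
      exact: (CV_minus (fun t => cu (UW (phi t)).1 b) (fun _ => cs b) _ _ (hcb b) (cv_const _)).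
    exact: (CV_mult (fun t => e t b) (fun t => e t b) _ _ h1 h1).
  by apply: Rsum_eq0 => b; ring.
have [qs hqs] := inner_ex hus.
have hqsp := hp _ _ hus hqs.
have [ys [hys hysq]] : exists y, (forall i, mulmv B y i >= mulmv F us i - mulmv A x i) /\ dot d y < qs + delta / 4.
  apply: NNPP => hn.
  have : qs + delta / 4 <= qs.
    apply: (proj2 hqs) => s [y [hy ->]]; apply: Rnot_lt_le => hlt; apply: hn; exists y; split => //.
  lra.
have [C hCd] : exists C, C = 2 + 2 * sqnorm cs by eexists.
have [K2 hK2d] : exists K2, K2 = C / (2 * rho) - (p + delta) by eexists.
have [K1 hK1d] : exists K1, K1 = 2 * K2 / rho by eexists.
have hK1r : K1 * rho = 2 * K2 by rewrite hK1d; field; lra.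
have [Y hYd] : exists Y, Y = sqnorm ys by eexists.
have hY : 0 <= Y by rewrite hYd; exact: sqnorm_nonneg.
have [b1 hb1d] : exists b1, b1 = 8 * Y / delta + 1 by eexists.
have hb1e : delta * b1 = 8 * Y + delta by rewrite hb1d; field; lra.
have hb1 : 0 < b1 by nra.
have hK1 := Rabs_pos K1.
have [b2 hb2d] : exists b2, b2 = delta / (8 * (Rabs K1 + 1)) by eexists.
have hb2e : b2 * (8 * (Rabs K1 + 1)) = delta by rewrite hb2d; field; lra.
have hb2 : 0 < b2 by nra.
have [N1 hN1] := cv_eventually he Rlt_0_1.
have [N3 hN3] := cv_eventually he (ltac:(apply: Rmult_lt_0_compat; [nra | lra]) : 0 < b2 * delta / 8).
have [N2' hN2'] := nat_large (8 * b1 * K2 / delta).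
pose N2 := maxn N2' 1.
pose t := maxn N1 (maxn N2 N3).
pose n' := phi t.
have htn : (t <= n')%N by exact: phi_ge.
have hn'1 : 1 <= INR n'.
  apply: (le_INR 1); apply/ssrnat.leP; apply: leq_trans htn.
  by rewrite /t /N2 leq_max; apply/orP; right; rewrite leq_max; apply/orP; left; rewrite leq_max orbT.
have hn'2 : 8 * b1 * K2 / delta < INR n'.
  apply: Rlt_le_trans hN2' _; apply: le_INR; apply/ssrnat.leP; apply: leq_trans htn.
  by rewrite /t /N2 leq_max; apply/orP; right; rewrite leq_max; apply/orP; left; rewrite leq_max leqnn.
have hn'3 : 8 * b1 * K2 < delta * INR n'.
  have ee : 8 * b1 * K2 = delta * (8 * b1 * K2 / delta) by field; lra.
  rewrite ee; apply: Rmult_lt_compat_l => //.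
have he1 : sqnorm (e t) < 1 by apply: hN1; rewrite /t leq_max leqnn.
have he3 : sqnorm (e t) < b2 * delta / 8.
  by apply: hN3; rewrite /t leq_max; apply/orP; right; rewrite leq_max leqnn orbT.
have [_ [hw0 hmain]] := hUW n'.
move: hw0 hmain (weak_dual hw0 hys).
set w := (UW n').2.
have hSa := sqnorm_nonneg (fun l => trmv B w l - d l).
set Sa := sqnorm (fun l => trmv B w l - d l).
have hW := sqnorm_nonneg w.
set W := sqnorm w.
move=> hw0 hmain hwd.
rewrite -/Sa in hSa; rewrite -/W in hW.
have hcn : sqnorm (cu (UW n').1) <= C.
  have : sqnorm (cu (UW n').1) <= 2 * sqnorm (e t) + 2 * sqnorm cs.
    rewrite /sqnorm /dot -!Rsum_scal -Rsum_add; apply: Rsum_le => b.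
    rewrite /e /n'.
    set u1 := cu (UW (phi t)).1 b; set u2 := cs b.
    have := Rle_0_sqr (u1 - 2 * u2); rewrite /Rsqr; nra.
  rewrite hCd; lra.
have hD := dot_bound w (cu (UW n').1) hrho.
rewrite -/W in hD.
have hCr : sqnorm (cu (UW n').1) / rho <= C / rho.
  apply: Rmult_le_compat_r => //; apply: Rlt_le; apply: Rinv_0_lt_compat; lra.
have hK2e : C / (2 * rho) = C / rho / 2 by field; lra.
have hmain2 : INR n' * Sa + rho * W / 2 < K2.
  rewrite hK2d hK2e; nra.
have hWK : W < K1.
  have h0 := Rmult_le_pos _ _ (pos_INR n') hSa.
  rewrite -/Sa in h0. have : rho * W < 2 * K2 by nra.
  nra.
have hSab : 8 * b1 * Sa < delta.
  have h1 : INR n' * Sa < K2.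
    have : 0 <= rho * W by apply: Rmult_le_pos; lra.
    nra.
  have h2 : 8 * b1 * (INR n' * Sa) < 8 * b1 * K2 by apply: Rmult_lt_compat_l => //; lra.
  nra.
have hda := dot_bound (fun l => trmv B w l - d l) ys hb1.
rewrite -/Sa -hYd in hda.
have hYb : Y / b1 < delta / 8.
  have ee : Y / b1 * b1 = Y by field; lra.
  nra.
have hde := dot_bound w (e t) hb2.
rewrite -/W in hde.
have hb2W : b2 * W <= delta / 8.
  have : W <= Rabs K1 by have := Rle_abs K1; lra.
  nra.
have heb : sqnorm (e t) / b2 < delta / 8.
  have ee : sqnorm (e t) / b2 * b2 = sqnorm (e t) by field; lra.
  nra.
have hsplit1 : dot w (cu (UW n').1) = dot w cs + dot w (e t).
  rewrite /dot -Rsum_add; apply: Rsum_ext => b; rewrite /e /n'; ring.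
have hsplit2 : dot (fun l => trmv B w l) ys = dot (fun l => trmv B w l - d l) ys + dot d ys.
  rewrite /dot -Rsum_add; apply: Rsum_ext => l; ring.
have hcs : dot w cs <= dot (fun l => trmv B w l) ys by exact: hwd.
have hp1 : 0 <= INR n' * Sa by apply: Rmult_le_pos => //; exact: pos_INR.
have hp2 : 0 <= rho * W by apply: Rmult_le_pos; lra.
nra.
Qed.


Lemma main_result : exists p : R,
    pi_value A B d F Uhat x p /\
    glb_of (fun s => exists (lam : R) (Lam : mat (k.+1 + m) n2) (rho : R),
              COP (@prod_cone k.+1 m Uhat) (copos_matrix A B d F x lam Lam rho) /\
              0 <= rho /\ s = lam + r * rho) p.
Proof.
have [K hK] := S_bounded.
have [p hp] : exists p, lub_of (fun s => exists u, Uset Uhat u /\ inner_value A B d F x u s) p.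
  apply: lub_ex.
    have [u hu] := hUne; have [q hq] := inner_ex hu; by exists q, u.
  by exists K => s [u [hu hq]]; exact: hK hu hq.
exists p; split => //.
split.
- move=> s [lam [Lam [rho [hcop [hrho ->]]]]].
  apply: (proj2 hp) => s' [u [hu hq]]; exact: dual_lower hcop hrho u s' hu hq.
- move=> v hv; apply: Rnot_lt_le => hlt.
  have hup : forall u q, Uset Uhat u -> inner_value A B d F x u q -> q <= p.
    by move=> u q hu hq; apply: (proj1 hp); exists u.
  have hrho : 0 < (v - p) / (4 * r) by apply: Rdiv_lt_0_compat; lra.
  have [t [ht hT]] := claimT (rho := (v - p) / (4 * r)) (delta := (v - p) / 4) hrho ltac:(lra) hup.
  have hcop := cop_construct ht (Rlt_le _ _ hrho) hT.
  have := hv _ (ex_intro _ _ (ex_intro _ _ (ex_intro _ _ (conj hcop (conj (Rlt_le _ _ hrho) erefl))))).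
  have -> : r * ((v - p) / (4 * r)) = (v - p) / 4 by field; lra.
  lra.
Qed.

End Main.



Unset Implicit Arguments.

Theorem proposition1
  (n1 n2 m k : nat)
  (A : mat m n1) (B : mat m n2) (c : vec n1) (d : vec n2) (F : mat m k.+1)
  (X : vec n1 -> Prop) (Uhat : vec k.+1 -> Prop)
  (* X closed convex *)
  (hXc : closedR X) (hXv : convexR X)
  (* Uhat closed convex full-dimensional coneR contained in R_+ x R^(k-1) *)
  (hUc : closedR Uhat) (hUv : convexR Uhat) (hUcone : coneR Uhat)
  (hUfd : full_dimensional Uhat) (hUpos : forall u, Uhat u -> 0 <= u ord0)
  (* U nonempty and compact *)
  (hUne : exists u, Uset Uhat u) (hUcpt : compactR (Uset Uhat))
  (* (A2) feasibility *)
  (hA2 : exists x y, RLP_feasible A B F X Uhat x y)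
  (* (A3) v*_RLP finite: some feasible point has finite objective, and the
     objective c^T x + sup_{u in U} d^T y(u) is bounded below by L *)
  (hA3up : exists x y, RLP_feasible A B F X Uhat x y /\
             exists M, forall u, Uset Uhat u -> dot c x + dot d (y u) <= M)
  (hA3low : exists L, forall x y, RLP_feasible A B F X Uhat x y ->
             forall M, (forall u, Uset Uhat u -> dot c x + dot d (y u) <= M) ->
             L <= M)
  (* (A4) relatively complete recourse *)
  (hA4 : forall x u, X x -> Uset Uhat u ->
           exists y : vec n2, forall i, mulmv B y i >= mulmv F u i - mulmv A x i)
  (r : R) (hr : 0 < r)
  (hrb : forall u w, Uset Uhat u -> extreme_point (Wset B d) w ->
           sqnorm u + sqnorm w <= r)
  (x : vec n1) (hx : X x) :
  exists p : R,
    pi_value A B d F Uhat x p /\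
    glb_of (fun s => exists (lam : R) (Lam : mat (k.+1 + m) n2) (rho : R),
              COP (@prod_cone k.+1 m Uhat) (copos_matrix A B d F x lam Lam rho) /\
              0 <= rho /\ s = lam + r * rho) p.
Proof.
exact: (main_result hUv hUcone hUpos hUne hUcpt hA3up hA3low hA4 hr hrb hx).
Qed.
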